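(* Let $P:\mathbf{R}^{24}\to\mathbf{R}$, $P(X,Y,Z)=\mathrm{Re}((oX\cdot oY)\cdot oZ)$, let $H\subset\mathbf{R}^{24}$ be a 21-dimensional linear subspace and $S^{20}_1$ its unit sphere. Let $\delta\in[1,2)$, $a,\bar b\in S^{20}_1$, $W=P(a)$, $\bar W=P(\bar b)$, and let $$\mu_1(\delta)=\tfrac{2}{\sqrt3}\cos\Big(\tfrac{\arccos(3\sqrt3W)-\pi}{3}\Big)-W\delta,\quad \mu_2(\delta)=\tfrac{2}{\sqrt3}\cos\Big(\tfrac{\arccos(3\sqrt3W)+\pi}{3}\Big)-W\delta,$$ $$\mu_3(\delta)=-\tfrac{2}{\sqrt3}\cos\Big(\tfrac{\arccos(3\sqrt3W)}{3}\Big)-W\delta,$$ which satisfy $\mu_1(\delta)\ge\mu_2(\delta)\ge\mu_3(\delta)$ and are the roots of $T^3+3W\delta T^2+(3W^2\delta^2-1)T+W(2-\delta)+W^3\delta^3$ (i.e. of $Q(T+\delta W)$ where $Q(T)=T^3-T+2W$); define $\bar\mu_1(\delta)\ge\bar\mu_2(\delta)\ge\bar\mu_3(\delta)$ by the same formulas with $W$ replaced by $\bar W$. For $K>0$ put $$\mu_-(K)=\min_{i=1,2,3}\big(\mu_i(\delta)-K\bar\mu_i(\delta)\big),\qquad \mu_+(K)=\max_{i=1,2,3}\big(\mu_i(\delta)-K\bar\mu_i(\delta)\big).$$ Then for every $K>0$ with $|K-1|+|\bar W-W|\neq0$, $$\frac{2-\delta}{4+\delta}\le\frac{\mu_+(K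)}{-\mu_-(K)}\le\frac{4+\delta}{2-\delta}.$$
   Context: $\mathcal{O}$ denotes the algebra of Cayley octonions: the 8-dimensional real algebra with basis $1,e_1,\dots,e_7$, where $1$ is the unit, $e_i^2=-1$, $e_ie_j=-e_je_i$ for $i\neq j$, and for every $i$ (indices mod 7) $e_ie_{i+1}=e_{i+3}$, $e_{i+1}e_{i+3}=e_i$, $e_{i+3}e_i=e_{i+1}$. For $t\in\mathbf{R}^8$, $ot=t_0+t_1e_1+\dots+t_7e_7$; $\mathrm{Re}$ is the coefficient of $1$; $\mathbf{R}^{24}=(\mathbf{R}^8)^3$. On the unit sphere of $\mathbf{R}^{24}$ one has $|P|\le 1/(3\sqrt3)$. *)

(* Defs.v *)
From mathcomp Require Import all_boot all_order all_algebra.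
From mathcomp Require Import all_classical all_reals all_analysis.
Set Implicit Arguments. Unset Strict Implicit. Unset Printing Implicit Defensive.
Import Order.TTheory GRing.Theory Num.Theory.
Local Open Scope ring_scope.

Section Oct.
Variable R : realType.

(* Fano lines (0-based, mod 7): {s, s+1, s+3}; with e_(i+1) = basis index i+1.
   e_a e_b = e_c when (a,b,c) is a cyclic rotation of (s, s+1, s+3). *)
Definition cyc_match (s a b c : nat) : bool :=
  let x := (s %% 7)%N in let y := (s.+1 %% 7)%N in let z := ((s + 3) %% 7)%N in
  [|| (a, b, c) == (x, y, z), (a, b, c) == (y, z, x) | (a, b, c) == (z, x, y)].

Definition fano_coef (a b c : nat) : R :=
  \sum_(s < 7) ((cyc_match s a b c)%:R - (cyc_match s b a c)%:R).

(* structure constants: e_i e_j = sum_k oct_coef i j k e_k, e_0 = 1 *)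
Definition oct_coef (i j k : 'I_8) : R :=
  if i == 0 :> nat then (j == k)%:R
  else if j == 0 :> nat then (i == k)%:R
  else if i == j then - (k == 0 :> nat)%:R
  else if k == 0 :> nat then 0
  else fano_coef i.-1 j.-1 k.-1.

Definition omul (x y : 'rV[R]_8) : 'rV[R]_8 :=
  \row_k \sum_(i < 8) \sum_(j < 8) x 0 i * y 0 j * oct_coef i j k.

Definition ore (x : 'rV[R]_8) : R := x 0 0.

Definition blk (v : 'rV[R]_24) (m : nat) : 'rV[R]_8 :=
  \row_(i < 8) v 0 (inord (8 * m + i)%N).

Definition P (v : 'rV[R]_24) : R :=
  ore (omul (omul (blk v 0) (blk v 1)) (blk v 2)).

Definition sqnorm n (v : 'rV[R]_n) : R := \sum_(i < n) v 0 i ^+ 2.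

Definition mu1 (W d : R) : R :=
  2 / Num.sqrt 3 * cos ((acos (3 * Num.sqrt 3 * W) - pi) / 3) - W * d.
Definition mu2 (W d : R) : R :=
  2 / Num.sqrt 3 * cos ((acos (3 * Num.sqrt 3 * W) + pi) / 3) - W * d.
Definition mu3 (W d : R) : R :=
  - (2 / Num.sqrt 3) * cos (acos (3 * Num.sqrt 3 * W) / 3) - W * d.

Definition mu_minus (W Wb d K : R) : R :=
  Num.min (mu1 W d - K * mu1 Wb d)
    (Num.min (mu2 W d - K * mu2 Wb d) (mu3 W d - K * mu3 Wb d)).
Definition mu_plus (W Wb d K : R) : R :=
  Num.max (mu1 W d - K * mu1 Wb d)
    (Num.max (mu2 W d - K * mu2 Wb d) (mu3 W d - K * mu3 Wb d)).
End Oct.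

(* Main.v *)
Require Import Defs.
From mathcomp Require Import all_boot all_order all_algebra.
From mathcomp Require Import all_classical all_reals all_analysis.
Import Order.TTheory GRing.Theory Num.Theory.
Local Open Scope ring_scope.
From mathcomp Require Import ring lra zify.

Definition tbl (i j k : nat) : nat :=
  match i, j, k with
  | 0, 0, 0 => 1%N
  | 0, 1, 1 => 1%N
  | 0, 2, 2 => 1%N
  | 0, 3, 3 => 1%N
  | 0, 4, 4 => 1%N
  | 0, 5, 5 => 1%N
  | 0, 6, 6 => 1%N
  | 0, 7, 7 => 1%N
  | 1, 0, 1 => 1%N
  | 1, 1, 0 => 2%N
  | 1, 2, 4 => 1%N
  | 1, 3, 7 => 1%N
  | 1, 4, 2 => 2%N
  | 1, 5, 6 => 1%N
  | 1, 6, 5 => 2%N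
  | 1, 7, 3 => 2%N
  | 2, 0, 2 => 1%N
  | 2, 1, 4 => 2%N
  | 2, 2, 0 => 2%N
  | 2, 3, 5 => 1%N
  | 2, 4, 1 => 1%N
  | 2, 5, 3 => 2%N
  | 2, 6, 7 => 1%N
  | 2, 7, 6 => 2%N
  | 3, 0, 3 => 1%N
  | 3, 1, 7 => 2%N
  | 3, 2, 5 => 2%N
  | 3, 3, 0 => 2%N
  | 3, 4, 6 => 1%N
  | 3, 5, 2 => 1%N
  | 3, 6, 4 => 2%N
  | 3, 7, 1 => 1%N
  | 4, 0, 4 => 1%N
  | 4, 1, 2 => 1%N
  | 4, 2, 1 => 2%N
  | 4, 3, 6 => 2%N
  | 4, 4, 0 => 2%N
  | 4, 5, 7 => 1%N
  | 4, 6, 3 => 1%N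
  | 4, 7, 5 => 2%N
  | 5, 0, 5 => 1%N
  | 5, 1, 6 => 2%N
  | 5, 2, 3 => 1%N
  | 5, 3, 2 => 2%N
  | 5, 4, 7 => 2%N
  | 5, 5, 0 => 2%N
  | 5, 6, 1 => 1%N
  | 5, 7, 4 => 1%N
  | 6, 0, 6 => 1%N
  | 6, 1, 5 => 1%N
  | 6, 2, 7 => 2%N
  | 6, 3, 4 => 1%N
  | 6, 4, 3 => 2%N
  | 6, 5, 1 => 2%N
  | 6, 6, 0 => 2%N
  | 6, 7, 2 => 1%N
  | 7, 0, 7 => 1%N
  | 7, 1, 3 => 1%N
  | 7, 2, 6 => 1%N
  | 7, 3, 1 => 2%N
  | 7, 4, 5 => 1%N
  | 7, 5, 4 => 2%N
  | 7, 6, 2 => 2%N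
  | 7, 7, 0 => 2%N
  | _, _, _ => 0%N end.

Definition cnt (a b c : nat) : nat := count (fun s => cyc_match s a b c) (iota 0 7).
Definition fz (a b c : nat) : int := (cnt a b c)%:Z - (cnt b a c)%:Z.
Definition octz (i j k : nat) : int :=
  if i == 0%N then (j == k)%:Z
  else if j == 0%N then (i == k)%:Z
  else if i == j then - (k == 0%N)%:Z
  else if k == 0%N then 0
  else fz i.-1 j.-1 k.-1.
Definition cint (c : nat) : int := if c is 1%N then 1 else if c is 2%N then -1 else 0.
Lemma octz_tbl_all : all (fun i => all (fun j => all (fun k => octz i j k == cint (tbl i j k)) (iota 0 8)) (iota 0 8)) (iota 0 8).
Proof. by vm_compute. Qed.

Section S.
Variable R : realType.
Definition cz (c : nat) : R := if c is 1%N then 1 else if c is 2%N then -1 else 0.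

Lemma fanoE a b c : fano_coef R a b c = (fz a b c)%:~R.
Proof.
rewrite /fano_coef /fz sumrB rmorphB /= -!natr_sum.
suff E : forall a b c, (\sum_(s < 7) cyc_match s a b c)%N = cnt a b c.
  by rewrite !E.
move=> x y z; rewrite -(big_mkord xpredT (fun s => (cyc_match s x y z : nat))).
rewrite /cnt -sum1_count /index_iota subn0 [RHS]big_mkcond.
by apply: eq_bigr => i _; case: cyc_match.
Qed.

Lemma oct_coefE (i j k : 'I_8) : oct_coef R i j k = cz (tbl i j k).
Proof.
have -> : oct_coef R i j k = (octz i j k)%:~R.
  rewrite /oct_coef /octz fanoE.
  have -> : (j == k) = (j == k :> nat) by [].
  have -> : (i == k) = (i == k :> nat) by [].
  have -> : (i == j) = (i == j :> nat) by [].
  case: (i == 0 :> nat); first by case: (j == k :> nat).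
  case: (j == 0 :> nat); first by case: (i == k :> nat).
  case: (i == j :> nat); first by rewrite rmorphN; case: (k == 0 :> nat).
  by case: (k == 0 :> nat).
have M : forall n : 'I_8, (n : nat) \in iota 0 8 by move=> n; rewrite mem_iota leq0n add0n ltn_ord.
move/allP: octz_tbl_all => /(_ i (M i)) /allP /(_ j (M j)) /allP /(_ k (M k)) /eqP ->.
by case: (tbl i j k) => [|[|[|]]].
Qed.

Lemma sum8 (F : 'I_8 -> R) : \sum_(i<8) F i = \sum_(0 <= n < 8) F (inord n).
Proof. by rewrite big_mkord; apply: eq_bigr => i _; rewrite inord_val. Qed.

Lemma omul_nat (x y : 'rV[R]_8) (k : nat) : (k < 8)%N -> omul x y 0 (inord k) =
  \sum_(0<=i<8) \sum_(0<=j<8) x 0 (inord i) * y 0 (inord j) * cz (tbl i j k).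
Proof.
move=> Hk; rewrite mxE sum8; apply: eq_big_nat => i /andP[_ Hi].
rewrite sum8; apply: eq_big_nat => j /andP[_ Hj].
by rewrite oct_coefE !inordK.
Qed.

Lemma sum8E (F : 'I_8 -> R) : \sum_(i<8) F i = F (inord 0) + F (inord 1) + F (inord 2) + F (inord 3) + F (inord 4) + F (inord 5) + F (inord 6) + F (inord 7).
Proof. by rewrite sum8 unlock /= addr0 !addrA. Qed.
Lemma omul0 (x y : 'rV[R]_8) : omul x y 0 (inord 0) = x 0 (inord 0) * y 0 (inord 0) - x 0 (inord 1) * y 0 (inord 1) - x 0 (inord 2) * y 0 (inord 2) - x 0 (inord 3) * y 0 (inord 3) - x 0 (inord 4) * y 0 (inord 4) - x 0 (inord 5) * y 0 (inord 5) - x 0 (inord 6) * y 0 (inord 6) - x 0 (inord 7) * y 0 (inord 7).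
Proof. rewrite omul_nat // unlock /=. ring. Qed.
Lemma omul1 (x y : 'rV[R]_8) : omul x y 0 (inord 1) = x 0 (inord 0) * y 0 (inord 1) + x 0 (inord 1) * y 0 (inord 0) + x 0 (inord 2) * y 0 (inord 4) + x 0 (inord 3) * y 0 (inord 7) - x 0 (inord 4) * y 0 (inord 2) + x 0 (inord 5) * y 0 (inord 6) - x 0 (inord 6) * y 0 (inord 5) - x 0 (inord 7) * y 0 (inord 3).
Proof. rewrite omul_nat // unlock /=. ring. Qed.
Lemma omul2 (x y : 'rV[R]_8) : omul x y 0 (inord 2) = x 0 (inord 0) * y 0 (inord 2) - x 0 (inord 1) * y 0 (inord 4) + x 0 (inord 2) * y 0 (inord 0) + x 0 (inord 3) * y 0 (inord 5) + x 0 (inord 4) * y 0 (inord 1) - x 0 (inord 5) * y 0 (inord 3) + x 0 (inord 6) * y 0 (inord 7) - x 0 (inord 7) * y 0 (inord 6).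
Proof. rewrite omul_nat // unlock /=. ring. Qed.
Lemma omul3 (x y : 'rV[R]_8) : omul x y 0 (inord 3) = x 0 (inord 0) * y 0 (inord 3) - x 0 (inord 1) * y 0 (inord 7) - x 0 (inord 2) * y 0 (inord 5) + x 0 (inord 3) * y 0 (inord 0) + x 0 (inord 4) * y 0 (inord 6) + x 0 (inord 5) * y 0 (inord 2) - x 0 (inord 6) * y 0 (inord 4) + x 0 (inord 7) * y 0 (inord 1).
Proof. rewrite omul_nat // unlock /=. ring. Qed.
Lemma omul4 (x y : 'rV[R]_8) : omul x y 0 (inord 4) = x 0 (inord 0) * y 0 (inord 4) + x 0 (inord 1) * y 0 (inord 2) - x 0 (inord 2) * y 0 (inord 1) - x 0 (inord 3) * y 0 (inord 6) + x 0 (inord 4) * y 0 (inord 0) + x 0 (inord 5) * y 0 (inord 7) + x 0 (inord 6) * y 0 (inord 3) - x 0 (inord 7) * y 0 (inord 5).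
Proof. rewrite omul_nat // unlock /=. ring. Qed.
Lemma omul5 (x y : 'rV[R]_8) : omul x y 0 (inord 5) = x 0 (inord 0) * y 0 (inord 5) - x 0 (inord 1) * y 0 (inord 6) + x 0 (inord 2) * y 0 (inord 3) - x 0 (inord 3) * y 0 (inord 2) - x 0 (inord 4) * y 0 (inord 7) + x 0 (inord 5) * y 0 (inord 0) + x 0 (inord 6) * y 0 (inord 1) + x 0 (inord 7) * y 0 (inord 4).
Proof. rewrite omul_nat // unlock /=. ring. Qed.
Lemma omul6 (x y : 'rV[R]_8) : omul x y 0 (inord 6) = x 0 (inord 0) * y 0 (inord 6) + x 0 (inord 1) * y 0 (inord 5) - x 0 (inord 2) * y 0 (inord 7) + x 0 (inord 3) * y 0 (inord 4) - x 0 (inord 4) * y 0 (inord 3) - x 0 (inord 5) * y 0 (inord 1) + x 0 (inord 6) * y 0 (inord 0) + x 0 (inord 7) * y 0 (inord 2).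
Proof. rewrite omul_nat // unlock /=. ring. Qed.
Lemma omul7 (x y : 'rV[R]_8) : omul x y 0 (inord 7) = x 0 (inord 0) * y 0 (inord 7) + x 0 (inord 1) * y 0 (inord 3) + x 0 (inord 2) * y 0 (inord 6) - x 0 (inord 3) * y 0 (inord 1) + x 0 (inord 4) * y 0 (inord 5) - x 0 (inord 5) * y 0 (inord 4) - x 0 (inord 6) * y 0 (inord 2) + x 0 (inord 7) * y 0 (inord 0).
Proof. rewrite omul_nat // unlock /=. ring. Qed.
Lemma sq_omul (x y : 'rV[R]_8) : sqnorm (omul x y) = sqnorm x * sqnorm y.
Proof. rewrite /sqnorm !sum8E omul0 omul1 omul2 omul3 omul4 omul5 omul6 omul7. ring. Qed.
Lemma cs8 (a0 a1 a2 a3 a4 a5 a6 a7 b0 b1 b2 b3 b4 b5 b6 b7 : R) :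
  (a0 * b0 - a1 * b1 - a2 * b2 - a3 * b3 - a4 * b4 - a5 * b5 - a6 * b6 - a7 * b7) ^+ 2 <= (a0 ^+ 2 + a1 ^+ 2 + a2 ^+ 2 + a3 ^+ 2 + a4 ^+ 2 + a5 ^+ 2 + a6 ^+ 2 + a7 ^+ 2) * (b0 ^+ 2 + b1 ^+ 2 + b2 ^+ 2 + b3 ^+ 2 + b4 ^+ 2 + b5 ^+ 2 + b6 ^+ 2 + b7 ^+ 2).
Proof.
rewrite -subr_ge0.
have -> : (a0 ^+ 2 + a1 ^+ 2 + a2 ^+ 2 + a3 ^+ 2 + a4 ^+ 2 + a5 ^+ 2 + a6 ^+ 2 + a7 ^+ 2) * (b0 ^+ 2 + b1 ^+ 2 + b2 ^+ 2 + b3 ^+ 2 + b4 ^+ 2 + b5 ^+ 2 + b6 ^+ 2 + b7 ^+ 2) - (a0 * b0 - a1 * b1 - a2 * b2 - a3 * b3 - a4 * b4 - a5 * b5 - a6 * b6 - a7 * b7) ^+ 2 = (a0 * (- b1) - a1 * b0) ^+ 2 + (a0 * (- b2) - a2 * b0) ^+ 2 + (a0 * (- b3) - a3 * b0) ^+ 2 + (a0 * (- b4) - a4 * b0) ^+ 2 + (a0 * (- b5) - a5 * b0) ^+ 2 + (a0 * (- b6) - a6 * b0) ^+ 2 + (a0 * (- b7) - a7 * b0) ^+ 2 + (a1 * (- b2) - a2 * (- b1)) ^+ 2 + (a1 * (- b3) - a3 * (- b1)) ^+ 2 + (a1 * (- b4) - a4 * (- b1)) ^+ 2 + (a1 * (-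 b5) - a5 * (- b1)) ^+ 2 + (a1 * (- b6) - a6 * (- b1)) ^+ 2 + (a1 * (- b7) - a7 * (- b1)) ^+ 2 + (a2 * (- b3) - a3 * (- b2)) ^+ 2 + (a2 * (- b4) - a4 * (- b2)) ^+ 2 + (a2 * (- b5) - a5 * (- b2)) ^+ 2 + (a2 * (- b6) - a6 * (- b2)) ^+ 2 + (a2 * (- b7) - a7 * (- b2)) ^+ 2 + (a3 * (- b4) - a4 * (- b3)) ^+ 2 + (a3 * (- b5) - a5 * (- b3)) ^+ 2 + (a3 * (- b6) - a6 * (- b3)) ^+ 2 + (a3 * (- b7) - a7 * (- b3)) ^+ 2 + (a4 * (- b5) - a5 * (- b4)) ^+ 2 + (a4 * (- b6) - a6 * (- b4)) ^+ 2 + (a4 * (- b7) - a7 * (- b4)) ^+ 2 + (a5 * (- b6) - a6 * (- b5)) ^+ 2 + (a5 * (- b7) - a7 * (- b5)) ^+ 2 + (a6 * (- b7) - a7 * (- b6)) ^+ 2 by ring.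
by repeat apply: addr_ge0; apply: sqr_ge0.
Qed.

Lemma amgm3 (X Y Z : R) : 0 <= X -> 0 <= Y -> 0 <= Z -> 27 * (X * Y * Z) <= (X + Y + Z) ^+ 3.
Proof.
move=> hx hy hz.
set t := (X + Y) / 2.
have h1 : X * Y <= t ^+ 2.
  rewrite -subr_ge0 (_ : _ - _ = ((X - Y) / 2) ^+ 2); first exact: sqr_ge0.
  by rewrite /t; field.
have h2 : 27 * (t ^+ 2 * Z) <= (2 * t + Z) ^+ 3.
  rewrite -subr_ge0 (_ : _ - _ = (t - Z) ^+ 2 * (8 * t + Z)); last by ring.
  apply: mulr_ge0; [exact: sqr_ge0 | rewrite /t; lra].
have -> : X + Y + Z = 2 * t + Z by rewrite /t; field.
have : 27 * (X * Y * Z) <= 27 * (t ^+ 2 * Z).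
  rewrite ler_pM2l; last by lra.
  by apply: ler_wpM2r.
lra.
Qed.

Lemma sqnorm_ge0 {n} (x : 'rV[R]_n) : 0 <= sqnorm x.
Proof. by apply: sumr_ge0 => i _; apply: sqr_ge0. Qed.

Lemma ord0E : (0 : 'I_8) = inord 0.
Proof. by apply: val_inj; rewrite /= inordK. Qed.

Lemma ore_cs (A z : 'rV[R]_8) : ore (omul A z) ^+ 2 <= sqnorm A * sqnorm z.
Proof. rewrite /ore ord0E omul0 /sqnorm !sum8E; apply: cs8. Qed.

Lemma sqnorm_blk (v : 'rV[R]_24) : sqnorm v = sqnorm (blk v 0) + sqnorm (blk v 1) + sqnorm (blk v 2).
Proof.
rewrite /sqnorm.
change (\sum_(i < 8 + (8 + 8)) v 0 i ^+ 2 = \sum_(i < 8) blk v 0 0 i ^+ 2 + \sum_(i < 8) blk v 1 0 i ^+ 2 + \sum_(i < 8) blk v 2 0 i ^+ 2).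
rewrite !big_split_ord /= addrA; congr (_ + _ + _); apply: eq_bigr => i _; rewrite mxE;
  congr (v 0 _ ^+ 2); apply: val_inj; rewrite /= inordK //.
all: by have := ltn_ord i; lia.
Qed.

Lemma P_bound (v : 'rV[R]_24) : sqnorm v = 1 -> 27 * P v ^+ 2 <= 1.
Proof.
move=> h; rewrite /P.
have hn := sqnorm_blk v; rewrite h in hn.
set x := blk v 0 in hn *; set y := blk v 1 in hn *; set z := blk v 2 in hn *.
have h1 := ore_cs (omul x y) z; rewrite sq_omul in h1.
have := amgm3 _ _ _ (sqnorm_ge0 x) (sqnorm_ge0 y) (sqnorm_ge0 z).
rewrite -hn expr1n => h2.
have : 27 * ore (omul (omul x y) z) ^+ 2 <= 27 * (sqnorm x * sqnorm y * sqnorm z) by rewrite ler_pM2l.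
lra.
Qed.
End S.

Section S2.
Variable R : realType.

Lemma max3 (a b c : R) : let m := Num.max a (Num.max b c) in
  [/\ a <= m, b <= m, c <= m & (m = a \/ m = b \/ m = c)].
Proof.
rewrite /= !le_max !lexx !orbT /=; split => //.
rewrite !maxEle; case: (leP b c) => _; case: ifP => _; tauto.
Qed.

Lemma min3 (a b c : R) : let m := Num.min a (Num.min b c) in
  [/\ m <= a, m <= b, m <= c & (m = a \/ m = b \/ m = c)].
Proof.
rewrite /= !ge_min !lexx !orbT /=; split => //.
rewrite !minEle; case: (leP b c) => _; case: ifP => _; tauto.
Qed.

Lemma final_core (A1 A2 A3 e d : R) : 1 <= d < 2 ->
  A1 + A2 + A3 = - 3 * (d * e) ->
  (A1 >= (2 - d) * e \/ A2 >= (2 - d) * e \/ A3 >= (2 - d) * e) ->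
  (A1 <= (2 - d) * e \/ A2 <= (2 - d) * e \/ A3 <= (2 - d) * e) ->
  ~ (A1 + d * e = 0 /\ A2 + d * e = 0 /\ A3 + d * e = 0) ->
  (2 - d) / (4 + d) <= Num.max A1 (Num.max A2 A3) / (- Num.min A1 (Num.min A2 A3))
  <= (4 + d) / (2 - d).
Proof.
move=> /andP[d1 d2] hs hup hlo hnz.
have [p1 p2 p3 pe] := max3 A1 A2 A3.
have [q1 q2 q3 qe] := min3 A1 A2 A3.
set mp := Num.max _ _ in p1 p2 p3 pe *.
set mm := Num.min _ _ in q1 q2 q3 qe *.
have hpmp : (2 - d) * e <= mp.
  case: hup => [h|[h|h]]; lra.
have hpmm : mm <= (2 - d) * e.
  case: hlo => [h|[h|h]]; lra.
have lo : - mm <= 3 * (d * e) + 2 * mp.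
  case: qe => [h|[h|h]]; lra.
have up : mp <= - 3 * (d * e) - 2 * mm.
  case: pe => [h|[h|h]]; lra.
have mmpos : 0 < - mm.
  have [eneg|epos] := ltP e 0.
    have : 0 < (2 - d) * (- e) by apply: mulr_gt0; lra.
    lra.
  have de0 : 0 <= d * e by apply: mulr_ge0; lra.
  rewrite lt_neqAle; apply/andP; split; last by lra.
  apply/negP => /eqP h0.
  have e0 : d * e = 0 by lra.
  apply: hnz; rewrite e0 !addr0; lra.
have d4 : 0 < 4 + d by lra.
have d2' : 0 < 2 - d by lra.
apply/andP; split.
  rewrite ler_pdivlMr // mulrAC ler_pdivrMr //.
  have h1 : 0 <= (2 - d) * (3 * (d * e) + 2 * mp + mm) by apply: mulr_ge0; lra.
  have h2 : 0 <= d * (mp - (2 - d) * e) by apply: mulr_ge0; lra.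
  nra.
rewrite ler_pdivrMr // mulrAC ler_pdivlMr //.
have h1 : 0 <= (2 - d) * (- 3 * (d * e) - 2 * mm - mp) by apply: mulr_ge0; lra.
have h2 : 0 <= d * ((2 - d) * e - mm) by apply: mulr_ge0; lra.
nra.
Qed.
End S2.

Section S3.
Variable R : realType.

Lemma cos3 (x : R) : cos (x + x + x) = 4 * cos x ^+ 3 - 3 * cos x.
Proof.
rewrite cosD sinD cosD.
have -> : (cos x * cos x - sin x * sin x) * cos x -
  (sin x * cos x + cos x * sin x) * sin x = cos x ^+ 3 - 3 * (sin x ^+ 2) * cos x by ring.
rewrite sin2cos2; ring.
Qed.

Lemma cos_pi3 : cos (pi / 3) = 1 / 2 :> R.
Proof.
have h := cos3 (pi / 3 : R).
have e : (pi / 3 + pi / 3 + pi / 3 : R) = pi by field.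
rewrite e cospi in h.
have cp : 0 < cos (pi / 3 : R).
  apply: cos_gt0_pihalf; have := @pi_gt0 R; lra.
set c := cos _ in h cp *.
have : (c + 1) * (2 * c - 1) ^+ 2 = 0.
  have e2 : (c + 1) * (2 * c - 1) ^+ 2 = (4 * c ^+ 3 - 3 * c) - (-1) by ring.
  by rewrite e2 -h subrr.
move/eqP; rewrite mulf_eq0 => /orP[/eqP|]; first by lra.
rewrite sqrf_eq0 => /eqP; lra.
Qed.

Lemma root_of (phi u W : R) : u ^+ 2 = 1 ->
  u * cos (phi + phi + phi) = - (3 * Num.sqrt 3 * W) ->
  (u * (2 / Num.sqrt 3) * cos phi) ^+ 3 - u * (2 / Num.sqrt 3) * cos phi + 2 * W = 0.
Proof.
move=> hu; rewrite cos3.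
set s := Num.sqrt 3; set c := cos phi => h.
have s2 : s ^+ 2 = 3 by rewrite sqr_sqrtr.
have s0 : s != 0 by rewrite sqrtr_eq0 -ltNge ltr0n.
have r2 : (2 / s) ^+ 2 = 4 / 3 by rewrite expr_div_n s2; ring.
have -> : (u * (2 / s) * c) ^+ 3 = u ^+ 2 * (2 / s) ^+ 2 * (u * (2 / s)) * c ^+ 3 by ring.
rewrite hu r2.
have -> : 1 * (4 / 3) * (u * (2 / s)) * c ^+ 3 - u * (2 / s) * c + 2 * W =
  (2 / s) / 3 * (u * (4 * c ^+ 3 - 3 * c)) + 2 * W by field.
rewrite h; field.
exact: s0.
Qed.

Lemma nu_facts (W : R) : 27 * W ^+ 2 <= 1 ->
  let n1 := 2 / Num.sqrt 3 * cos ((acos (3 * Num.sqrt 3 * W) - pi) / 3) in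
  let n2 := 2 / Num.sqrt 3 * cos ((acos (3 * Num.sqrt 3 * W) + pi) / 3) in
  let n3 := - (2 / Num.sqrt 3) * cos (acos (3 * Num.sqrt 3 * W) / 3) in
  [/\ n1 + n2 + n3 = 0, n1 ^+ 3 - n1 + 2 * W = 0, n2 ^+ 3 - n2 + 2 * W = 0,
      n3 ^+ 3 - n3 + 2 * W = 0 & 0 < n1 /\ n3 < 0].
Proof.
move=> hW n1 n2 n3.
have s2 : Num.sqrt 3 ^+ 2 = 3 :> R by rewrite sqr_sqrtr.
have spos : 0 < Num.sqrt 3 :> R by rewrite sqrtr_gt0.
have rpos : 0 < 2 / Num.sqrt 3 :> R by apply: divr_gt0.
have t2 : (3 * Num.sqrt 3 * W) ^+ 2 = 27 * W ^+ 2 by rewrite !exprMn s2; ring.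
have ht1 : -1 <= 3 * Num.sqrt 3 * W <= 1.
  set t := 3 * Num.sqrt 3 * W in t2 *; apply/andP; split; nra.
have cth : cos (acos (3 * Num.sqrt 3 * W)) = 3 * Num.sqrt 3 * W.
  by apply: acosK; rewrite in_itv /=.
have th0 := acos_ge0 ht1; have thpi := acos_lepi ht1.
have pi0 := @pi_gt0 R.
rewrite /n1 /n2 /n3; move: cth th0 thpi.
set th := acos _ => cth th0 thpi.
have e1 : (th - pi) / 3 = th / 3 - pi / 3 by rewrite mulrBl.
have e2 : (th + pi) / 3 = th / 3 + pi / 3 by rewrite mulrDl.
have e3 : forall x : R, x / 3 + x / 3 + x / 3 = x by move=> x; field.
split.
- rewrite e1 e2 cosB cosD cos_pi3; field; by rewrite gt_eqF.
- have := @root_of ((th - pi) / 3) 1 W (expr1n _ _).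
  rewrite !mul1r e3 cosB cospi sinpi cth mulr0 addr0 => H; apply: H; ring.
- have := @root_of ((th + pi) / 3) 1 W (expr1n _ _).
  rewrite !mul1r e3 cosD cospi sinpi cth mulr0 subr0 => H; apply: H; ring.
- have := @root_of (th / 3) (-1) W (etrans (sqrrN 1) (expr1n _ _)).
  rewrite !mulN1r e3 cth => H; apply: H; ring.
split.
  apply: mulr_gt0 => //; apply: cos_gt0_pihalf; rewrite e1; apply/andP; split; lra.
rewrite mulNr oppr_lt0; apply: mulr_gt0 => //; apply: cos_gt0_pihalf.
apply/andP; split; lra.
Qed.
End S3.

Section S5.
Variable R : realType.

Lemma cube_lt (x y : R) : x ^+ 3 < y ^+ 3 -> x < y.
Proof.
move=> h; rewrite ltNge; apply/negP => hyx.
have : 0 <= (x - y) * ((x + y / 2) ^+ 2 + 3 / 4 * y ^+ 2).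
  apply: mulr_ge0; first lra.
  by apply: addr_ge0; [exact: sqr_ge0 | apply: mulr_ge0; [lra | exact: sqr_ge0]].
have -> : (x - y) * ((x + y / 2) ^+ 2 + 3 / 4 * y ^+ 2) = x ^+ 3 - y ^+ 3 by field.
lra.
Qed.

Lemma cube_root (K : R) : 0 < K -> exists2 k : R, 0 < k & k ^+ 3 = K.
Proof.
move=> hK; exists (K `^ 3^-1); first exact: powR_gt0.
rewrite -powR_mulrn ?powR_ge0 // -powRrM mulVf ?powRr1 //.
all: try exact: ltW.
all: by rewrite pnatr_eq0.
Qed.

Lemma keyid (x y W Wb d K : R) : x ^+ 3 - x + 2 * W = 0 -> y ^+ 3 - y + 2 * Wb = 0 ->
  (x - W * d - K * (y - Wb * d)) - (2 - d) * (W - K * Wb) = x ^+ 3 - K * y ^+ 3.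
Proof.
move=> hx hy.
have -> : (x - W * d - K * (y - Wb * d)) - (2 - d) * (W - K * Wb) =
  x ^+ 3 - K * y ^+ 3 - (x ^+ 3 - x + 2 * W) + K * (y ^+ 3 - y + 2 * Wb) by ring.
by rewrite hx hy mulr0 subr0 addr0.
Qed.

Lemma sign_exists (n1 n2 n3 m1 m2 m3 K : R) : 0 < K ->
  n1 + n2 + n3 = 0 -> m1 + m2 + m3 = 0 ->
  (0 <= n1 ^+ 3 - K * m1 ^+ 3 \/ 0 <= n2 ^+ 3 - K * m2 ^+ 3 \/ 0 <= n3 ^+ 3 - K * m3 ^+ 3) /\
  (n1 ^+ 3 - K * m1 ^+ 3 <= 0 \/ n2 ^+ 3 - K * m2 ^+ 3 <= 0 \/ n3 ^+ 3 - K * m3 ^+ 3 <= 0).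
Proof.
move=> hK sn sm.
have [k kpos k3] := cube_root _ hK.
have km : k * m1 + k * m2 + k * m3 = 0 by rewrite -!mulrDr sm mulr0.
have E : forall m, K * m ^+ 3 = (k * m) ^+ 3 by move=> m; rewrite exprMn k3.
rewrite !E.
split.
  case: (leP 0 (n1 ^+ 3 - (k * m1) ^+ 3)) => h1; first by left.
  case: (leP 0 (n2 ^+ 3 - (k * m2) ^+ 3)) => h2; first by right; left.
  case: (leP 0 (n3 ^+ 3 - (k * m3) ^+ 3)) => h3; first by right; right.
  have : n1 < k * m1 by apply: cube_lt; lra.
  have : n2 < k * m2 by apply: cube_lt; lra.
  have : n3 < k * m3 by apply: cube_lt; lra.
  lra.
case: (leP (n1 ^+ 3 - (k * m1) ^+ 3) 0) => h1; first by left.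
case: (leP (n2 ^+ 3 - (k * m2) ^+ 3) 0) => h2; first by right; left.
case: (leP (n3 ^+ 3 - (k * m3) ^+ 3) 0) => h3; first by right; right.
have : k * m1 < n1 by apply: cube_lt; lra.
have : k * m2 < n2 by apply: cube_lt; lra.
have : k * m3 < n3 by apply: cube_lt; lra.
lra.
Qed.

Lemma degen (n1 n3 m1 m3 W Wb K : R) : 0 < K -> m3 < m1 ->
  n1 ^+ 3 - n1 + 2 * W = 0 -> n3 ^+ 3 - n3 + 2 * W = 0 ->
  m1 ^+ 3 - m1 + 2 * Wb = 0 -> m3 ^+ 3 - m3 + 2 * Wb = 0 ->
  n1 = K * m1 -> n3 = K * m3 -> K = 1 /\ W = Wb.
Proof.
move=> hK hm r1 r3 q1 q3 e1 e3.
have x1 : (K ^+ 3 - K) * m1 + 2 * W - 2 * K ^+ 3 * Wb = 0.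
  have -> : (K ^+ 3 - K) * m1 + 2 * W - 2 * K ^+ 3 * Wb =
    (K * m1) ^+ 3 - K * m1 + 2 * W - K ^+ 3 * (m1 ^+ 3 - m1 + 2 * Wb) by ring.
  by rewrite -e1 r1 q1 mulr0 subr0.
have x3 : (K ^+ 3 - K) * m3 + 2 * W - 2 * K ^+ 3 * Wb = 0.
  have -> : (K ^+ 3 - K) * m3 + 2 * W - 2 * K ^+ 3 * Wb =
    (K * m3) ^+ 3 - K * m3 + 2 * W - K ^+ 3 * (m3 ^+ 3 - m3 + 2 * Wb) by ring.
  by rewrite -e3 r3 q3 mulr0 subr0.
have : (K * ((K - 1) * (K + 1))) * (m1 - m3) = 0.
  have -> : (K * ((K - 1) * (K + 1))) * (m1 - m3) =
    ((K ^+ 3 - K) * m1 + 2 * W - 2 * K ^+ 3 * Wb) - ((K ^+ 3 - K) * m3 + 2 * W - 2 * K ^+ 3 * Wb) by ring.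
  by rewrite x1 x3 subrr.
move/eqP; rewrite !mulf_eq0 => /orP[/orP[|/orP[|]]|] /eqP h; try lra.
have K1 : K = 1 by lra.
split => //; rewrite K1 in x1; move: x1; rewrite expr1n subrr mul0r add0r mulr1; lra.
Qed.
End S5.

Theorem lemma4p1 (R : realType) (H : 'M[R]_24) (a b : 'rV[R]_24) (d K : R) :
  \rank H = 21%N ->
  (a <= H)%MS -> sqnorm a = 1 ->
  (b <= H)%MS -> sqnorm b = 1 ->
  1 <= d < 2 -> 0 < K ->
  `|K - 1| + `|P b - P a| != 0 ->
  (2 - d) / (4 + d) <= mu_plus (P a) (P b) d K / (- mu_minus (P a) (P b) d K)
  <= (4 + d) / (2 - d).
Proof.
move=> _ _ ha _ hb hd hK hne.
have hW := @P_bound R a ha; have hWb := @P_bound R b hb.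
move: hne hW hWb; set W := P a; set Wb := P b => hne hW hWb.
have := @nu_facts R W hW; move=> /= -[s1 r1 r2 r3 [p1 p3]].
have := @nu_facts R Wb hWb; move=> /= -[tb qa qb qc [oa oc]].
rewrite /mu_plus /mu_minus /mu1 /mu2 /mu3.
move: s1 r1 r2 r3 p1 p3 tb qa qb qc oa oc.
set n1 := 2 / Num.sqrt 3 * cos ((acos (3 * Num.sqrt 3 * W) - pi) / 3).
set n2 := 2 / Num.sqrt 3 * cos ((acos (3 * Num.sqrt 3 * W) + pi) / 3).
set n3 := - (2 / Num.sqrt 3) * cos (acos (3 * Num.sqrt 3 * W) / 3).
set m1 := 2 / Num.sqrt 3 * cos ((acos (3 * Num.sqrt 3 * Wb) - pi) / 3).
set m2 := 2 / Num.sqrt 3 * cos ((acos (3 * Num.sqrt 3 * Wb) + pi) / 3).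
set m3 := - (2 / Num.sqrt 3) * cos (acos (3 * Num.sqrt 3 * Wb) / 3).
move=> s1 r1 r2 r3 p1 p3 tb qa qb qc oa oc.
apply: (@final_core R _ _ _ (W - K * Wb) d hd).
- have -> : n1 - W * d - K * (m1 - Wb * d) + (n2 - W * d - K * (m2 - Wb * d)) +
    (n3 - W * d - K * (m3 - Wb * d)) =
    (n1 + n2 + n3) - K * (m1 + m2 + m3) - 3 * (d * (W - K * Wb)) by ring.
  by rewrite s1 tb mulr0 !subr0 sub0r mulNr.
- have [G _] := @sign_exists R n1 n2 n3 m1 m2 m3 K hK s1 tb.
  case: G => [h|[h|h]]; [left|right; left|right; right]; by rewrite -subr_ge0 (@keyid R _ _ W Wb d K).
- have [_ G] := @sign_exists R n1 n2 n3 m1 m2 m3 K hK s1 tb.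
  case: G => [h|[h|h]]; [left|right; left|right; right]; by rewrite -subr_le0 (@keyid R _ _ W Wb d K).
- move=> [z1 [_ z3]].
  have e1 : n1 = K * m1 by lra.
  have e3 : n3 = K * m3 by lra.
  have [K1 WW] := @degen R n1 n3 m1 m3 W Wb K hK (lt_trans oc oa) r1 r3 qa qc e1 e3.
  by move: hne; rewrite K1 WW !subrr normr0 addr0 eqxx.
Qed.
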